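(* Let $f$ be a positive definite function and let $W=\{w_1,\dots,w_N\}\subset V$ be a norming set for $\mathcal{B}_M$. Then for every $x\in\mathcal{L}(G)$: (1) if $\hat{f}_k\le C_1k^{-s}$ for all $k$, with constants $C_1>0$ and $s>1$, then $$\max_{v\in V}|x(v)-\mathrm{I}_Wx(v)|\le\sqrt{\tfrac{C_1}{s-1}}\big(1+\|(\mathbf{S}_W\mathbf{B}_M)^{-1}\|\big)M^{-\frac{s-1}{2}}\|x\|_{K_f};$$ (2) if $\hat{f}_k\le C_2e^{-tk}$ for all $k$, with constants $C_2>0$ and $t>0$, then $$\max_{v\in V}|x(v)-\mathrm{I}_Wx(v)|\le\sqrt{\tfrac{C_2}{1-e^{-t}}}\big(1+\|(\mathbf{S}_W\mathbf{B}_M)^{-1}\|\big)e^{-\frac{t}{2}(M+1)}\|x\|_{K_f}.$$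
   Context: Let $G$ be a graph with vertex set $V=\{v_1,\dots,v_n\}$, symmetric non-negative weighted adjacency matrix $\mathbf{A}$, degree matrix $\mathbf{D}=\mathrm{diag}(\sum_k\mathbf{A}_{ik})$ (positive), and normalized Laplacian $\mathbf{L}=\mathbf{I}_n-\mathbf{D}^{-1/2}\mathbf{A}\mathbf{D}^{-1/2}$. Signals are vectors in $\mathcal{L}(G)\cong\mathbb{R}^n$ with euclidean norm and standard basis $e_1,\dots,e_n$. Fix an orthonormal eigendecomposition $\mathbf{L}=\mathbf{U}\,\mathrm{diag}(\lambda_1,\dots,\lambda_n)\mathbf{U}^\intercal$ with columns $u_1,\dots,u_n$. Fourier transform $\hat{x}=\mathbf{U}^\intercal x$; convolution operator $\mathbf{C}_x=\mathbf{U}\,\mathrm{diag}(\hat{x})\mathbf{U}^\intercal$. For $f\in\mathcal{L}(G)$ let $(\mathbf{K}_f)_{ij}=(\mathbf{C}_{e_j}f)(v_i)$; $f$ is a positive definite function if $\mathbf{K}_f$ is symmetric strictly positive definite; then $\|x\|_{K_f}=\sqrt{x^\intercal\mathbf{K}_f^{-1}x}$. For distinct nodes $w_k=v_{j_k}$, let $(\mathbf{K}_{f,W})_{kl}=(\mathbf{C}_{e_{j_l}}f)(w_k)$; the GBF interpolant is $\mathrm{I}_Wx=\sum_{k=1}^Nc_k\mathbf{C}_{e_{j_k}}f$ with $\mathbf{K}_{f,W}c=(x(w_1),\dots,x(w_N))^\intercal$. Let $\mathcal{B}_M=\mathrm{span}\{u_1,\dots,u_M\}$, $\mathbf{S}_Wx(v)=x(v)$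 for $v\in W$ and $0$ otherwise, $\mathbf{B}_Mx=\sum_{k=1}^M(u_k^\intercal x)u_k$. $W$ is a norming set for $\mathcal{B}_M$ if $\mathbf{S}_W\mathbf{B}_M$ is injective on $\mathcal{B}_M$; $\|(\mathbf{S}_W\mathbf{B}_M)^{-1}\|$ is the euclidean operator norm of the inverse of $\mathbf{S}_W\mathbf{B}_M|_{\mathcal{B}_M}$ on its image $\mathbf{S}_W(\mathcal{B}_M)$. *)

(* Defs.v *)
From HB Require Import structures.
From mathcomp Require Import all_boot all_order all_algebra.
From mathcomp Require Import classical_sets reals sequences exp.
Set Implicit Arguments. Unset Strict Implicit. Unset Printing Implicit Defensive.
Import Order.TTheory GRing.Theory Num.Theory.
Local Open Scope ring_scope.
Local Open Scope classical_set_scope.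

Section GBF.
Variables (R : realType) (n : nat).

(* signals are column vectors 'cV[R]_n; node v_i is index i : 'I_n *)

Definition enorm (x : 'cV[R]_n) : R := Num.sqrt (\sum_(i < n) x i 0 ^+ 2).

Definition ebasis (j : 'I_n) : 'cV[R]_n := \col_i (i == j)%:R.

Definition degree (A : 'M[R]_n) (i : 'I_n) : R := \sum_(k < n) A i k.
Definition Dinvsqrt (A : 'M[R]_n) : 'M[R]_n :=
  diag_mx (\row_i (Num.sqrt (degree A i))^-1).
Definition normLap (A : 'M[R]_n) : 'M[R]_n :=
  1%:M - Dinvsqrt A *m A *m Dinvsqrt A.

Definition gft (U : 'M[R]_n) (x : 'cV[R]_n) : 'cV[R]_n := U^T *m x.
Definition convop (U : 'M[R]_n) (x : 'cV[R]_n) : 'M[R]_n :=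
  U *m diag_mx (gft U x)^T *m U^T.

Definition Kf (U : 'M[R]_n) (f : 'cV[R]_n) : 'M[R]_n :=
  \matrix_(i, j) (convop U (ebasis j) *m f) i 0.

Definition pos_def_fun (U : 'M[R]_n) (f : 'cV[R]_n) : Prop :=
  (Kf U f)^T = Kf U f /\
  forall x : 'cV[R]_n, x != 0 -> 0 < (x^T *m Kf U f *m x) 0 0.

Definition Kfnorm (U : 'M[R]_n) (f : 'cV[R]_n) (x : 'cV[R]_n) : R :=
  Num.sqrt ((x^T *m invmx (Kf U f) *m x) 0 0).

(* W = {w_1,...,w_N}, w_k = v_{j k}, with j injective (distinct nodes) *)
Variable N : nat.

Definition KfW (U : 'M[R]_n) (f : 'cV[R]_n) (j : 'I_N -> 'I_n) : 'M[R]_N :=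
  \matrix_(k, l) (convop U (ebasis (j l)) *m f) (j k) 0.

Definition interp (U : 'M[R]_n) (f : 'cV[R]_n) (j : 'I_N -> 'I_n)
    (x : 'cV[R]_n) : 'cV[R]_n :=
  let c := invmx (KfW U f j) *m (\col_k x (j k) 0) in
  \sum_(k < N) c k 0 *: (convop U (ebasis (j k)) *m f).

Definition SW (j : 'I_N -> 'I_n) (x : 'cV[R]_n) : 'cV[R]_n :=
  \col_i (if [exists k, j k == i] then x i 0 else 0).

(* B_M (projection) with u_k = col k U  (k is 0-indexed: u_{k+1} = col k U) *)
Definition BM (U : 'M[R]_n) (M : nat) (x : 'cV[R]_n) : 'cV[R]_n :=
  \sum_(k < n | (k < M)%N) ((col k U)^T *m x) 0 0 *: col k U.

Definition inBM (U : 'M[R]_n) (M : nat) (y : 'cV[R]_n) : Prop :=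
  exists a : 'I_n -> R, y = \sum_(k < n | (k < M)%N) a k *: col k U.

Definition norming (U : 'M[R]_n) (M : nat) (j : 'I_N -> 'I_n) : Prop :=
  forall y1 y2, inBM U M y1 -> inBM U M y2 ->
    SW j (BM U M y1) = SW j (BM U M y2) -> y1 = y2.

(* ||(S_W B_M)^{-1}||: operator norm of the inverse of S_W B_M|_{B_M} on its
   image, i.e. sup { ||T^{-1} z|| : z in S_W(B_M), ||z|| <= 1 }, written with
   y = T^{-1} z ranging over B_M *)
Definition inv_opnorm (U : 'M[R]_n) (M : nat) (j : 'I_N -> 'I_n) : R :=
  sup [set enorm y | y in [set y | inBM U M y /\ enorm (SW j (BM U M y)) <= 1]].

(* max_{v in V} |x(v)| (values nonnegative, so 0 is a neutral seed) *)
Definition maxabs (x : 'cV[R]_n) : R := \big[Num.max/0]_(v < n) `|x v 0|.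

End GBF.

(* Main.v *)
Require Import Defs.
From HB Require Import structures.
From mathcomp Require Import all_boot all_order all_algebra.
From mathcomp Require Import classical_sets reals sequences exp.
Import Order.TTheory GRing.Theory Num.Theory.
Local Open Scope ring_scope.
From mathcomp Require Import ring lra.
Set Implicit Arguments. Unset Strict Implicit. Unset Printing Implicit Defensive.

Section Scal.
Variable R : realType.

Lemma quad_cs (p q r : R) : 0 <= r ->
  (forall t, 0 <= p + 2 * t * q + t ^+ 2 * r) -> q ^+ 2 <= p * r.
Proof.
move=> r0 H; have [rp|] := ltrP 0 r.
  have e : p * r - q ^+ 2 = r * (p + 2 * (- q / r) * q + (- q / r) ^+ 2 * r).
    by field; rewrite gt_eqF.
  by rewrite -subr_ge0 e; apply: mulr_ge0; [exact: ltW|exact: H].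
move=> rle; have e0 : r = 0 by apply/eqP; rewrite eq_le rle r0.
move: H; rewrite e0 => H.
have [q0|qn] := eqVneq q 0; first by rewrite q0 expr0n mulr0.
have := H (- (p + 1) / (2 * q)).
have -> : p + 2 * (- (p + 1) / (2 * q)) * q + (- (p + 1) / (2 * q)) ^+ 2 * 0 = -1.
  by field; rewrite qn.
by rewrite oppr_ge0 ler10.
Qed.

End Scal.

Section Mx.
Variables (R : realType) (n : nat).
Definition qf (Q : 'M[R]_n) (u w : 'cV[R]_n) : R := (u^T *m Q *m w) 0 0.

Lemma qf_sym Q u w : Q^T = Q -> qf Q u w = qf Q w u.
Proof.
move=> HQ; rewrite /qf.
transitivity ((w^T *m Q *m u)^T 0 0); last by rewrite mxE.
by rewrite !trmx_mul trmxK HQ mulmxA.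
Qed.

Lemma qf_expand Q u w t : qf Q (u + t *: w) (u + t *: w) =
  qf Q u u + t * qf Q u w + t * qf Q w u + t ^+ 2 * qf Q w w.
Proof.
rewrite /qf [(_ + _)^T]linearD /= [(t *: w)^T]linearZ /= !mulmxDl !mulmxDr.
rewrite -!scalemxAl -!scalemxAr !mxE.
ring.
Qed.

Lemma qf_cs Q u w : Q^T = Q -> (forall z, 0 <= qf Q z z) ->
  qf Q u w ^+ 2 <= qf Q u u * qf Q w w.
Proof.
move=> HQ H; apply: quad_cs; first exact: H.
move=> t; have := H (u + t *: w); rewrite qf_expand (qf_sym w u HQ).
by rewrite -mulrA mulr2n mulrDl !mul1r addrA.
Qed.

Lemma qfDl Q u v w : qf Q (u + v) w = qf Q u w + qf Q v w.
Proof. by rewrite /qf linearD /= !mulmxDl mxE. Qed.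
Lemma qfDr Q u v w : qf Q w (u + v) = qf Q w u + qf Q w v.
Proof. by rewrite /qf !mulmxDr mxE. Qed.
Lemma qfNl Q u w : qf Q (- u) w = - qf Q u w.
Proof. by rewrite /qf linearN /= !mulNmx mxE. Qed.
Lemma qfNr Q u w : qf Q w (- u) = - qf Q w u.
Proof. by rewrite /qf !mulmxN mxE. Qed.

End Mx.


Lemma qf0 (R : realType) m (Q : 'M[R]_m) : qf Q 0 0 = 0.
Proof. by rewrite /qf mulmx0 mxE. Qed.

Lemma PD_unit (R : realType) m (Q : 'M[R]_m) : Q^T = Q ->
  (forall z, z != 0 -> 0 < qf Q z z) -> Q \in unitmx.
Proof.
move=> HQ H; rewrite -row_free_unit; apply/inj_row_free => v Hv.
apply/trmx_inj; rewrite trmx0; apply/eqP; apply/negPn/negP => nz.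
by have := H _ nz; rewrite /qf trmxK Hv mul0mx mxE ltxx.
Qed.

Lemma sq_le_abs (R : realType) (x c : R) : 0 <= c -> x ^+ 2 <= c ^+ 2 -> `|x| <= c.
Proof.
move=> c0 h; rewrite -sqrtr_sqr -(ger0_norm c0) -sqrtr_sqr ler_sqrt //.
exact: sqr_ge0.
Qed.

Lemma abs_le_sq (R : realType) (x c : R) : `|x| <= c -> x ^+ 2 <= c ^+ 2.
Proof.
move=> h; have -> : x ^+ 2 = `|x| ^+ 2 by rewrite -normrX ger0_norm ?sqr_ge0.
by rewrite !expr2; apply: ler_pM => //; apply: normr_ge0.
Qed.

Lemma sum_cs (R : realType) m (p q : 'I_m -> R) :
  (\sum_i p i * q i) ^+ 2 <= (\sum_i p i ^+ 2) * (\sum_i q i ^+ 2).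
Proof.
have e t : \sum_i (p i + t * q i) ^+ 2 =
  \sum_i p i ^+ 2 + 2 * t * (\sum_i p i * q i) + t ^+ 2 * \sum_i q i ^+ 2.
  rewrite !mulr_sumr -!big_split /=; apply: eq_bigr => i _; ring.
apply: quad_cs; first by apply: sumr_ge0 => i _; apply: sqr_ge0.
by move=> t; rewrite -e; apply: sumr_ge0 => i _; apply: sqr_ge0.
Qed.

Lemma sq_le_sum (R : realType) m (F : 'I_m -> R) k :
  F k ^+ 2 <= \sum_i F i ^+ 2.
Proof.
rewrite (bigD1 k) //= lerDl; apply: sumr_ge0 => i _; exact: sqr_ge0.
Qed.

Section Main.
Variables (R : realType) (n : nat) (U : 'M[R]_n) (f : 'cV[R]_n)
  (N : nat) (j : 'I_N -> 'I_n) (M : nat).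
Hypotheses (hUorth : U^T *m U = 1%:M) (hf : pos_def_fun U f)
  (hj : injective j) (hW : norming U M j).

Local Notation K := (Kf U f).
Local Notation fh := (gft U f).
Definition Pm : 'M[R]_(n, N) := \matrix_(i, k) (i == j k)%:R.

Lemma mulmxP_E m (B : 'M[R]_(m, n)) i l : (B *m Pm) i l = B i (j l).
Proof.
rewrite mxE (bigD1 (j l)) //= mxE eqxx mulr1 big1 ?addr0 // => a ne.
by rewrite mxE (negbTE ne) mulr0.
Qed.

Lemma trPmul_E m (C : 'M[R]_(n, m)) k l : (Pm^T *m C) k l = C (j k) l.
Proof.
rewrite mxE (bigD1 (j k)) //= !mxE eqxx mul1r big1 ?addr0 // => a ne.
by rewrite !mxE (negbTE ne) mul0r.
Qed.

Lemma Pmul_j (c : 'cV[R]_N) k : (Pm *m c) (j k) 0 = c k 0.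
Proof.
rewrite mxE (bigD1 k) //= mxE eqxx mul1r big1 ?addr0 // => a ne.
by rewrite mxE (inj_eq hj) eq_sym (negbTE ne) mul0r.
Qed.

Lemma gft_ebasis k l : \sum_i U^T l i * ebasis R k i 0 = U k l.
Proof.
rewrite (bigD1 k) //= !mxE eqxx mulr1 big1 ?addr0 // => a ne.
by rewrite !mxE (negbTE ne) mulr0.
Qed.

Lemma K_decomp : K = U *m diag_mx fh^T *m U^T.
Proof.
apply/matrixP => i k; rewrite mxE /convop -mulmxA !mul_mx_diag.
rewrite !mxE; apply: eq_bigr => l _; rewrite !mxE gft_ebasis.
by rewrite mulrAC.
Qed.

Lemma K_sym : K^T = K. Proof. by case: hf. Qed.
Lemma K_pos z : 0 <= qf K z z.
Proof.
have [->|nz] := eqVneq z 0; first by rewrite qf0.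
by apply: ltW; case: hf => _; apply.
Qed.
Lemma K_unit : K \in unitmx.
Proof. by apply: PD_unit; case: hf. Qed.
Definition Ki := invmx K.
Lemma Ki_sym : Ki^T = Ki. Proof. by rewrite /Ki trmx_inv K_sym. Qed.
Lemma KKi : K *m Ki = 1%:M. Proof. exact: mulmxV K_unit. Qed.
Lemma KiK : Ki *m K = 1%:M. Proof. exact: mulVmx K_unit. Qed.
Lemma Ki_pos z : 0 <= qf Ki z z.
Proof.
have := K_pos (Ki *m z); rewrite /qf trmx_mul Ki_sym.
by rewrite !mulmxA -[z^T *m Ki *m K]mulmxA KiK mulmx1.
Qed.

Lemma KfW_E : KfW U f j = Pm^T *m K *m Pm.
Proof. by apply/matrixP => k l; rewrite mulmxP_E trPmul_E !mxE. Qed.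

Lemma qf_Pm (c : 'cV[R]_N) : qf (KfW U f j) c c = qf K (Pm *m c) (Pm *m c).
Proof. by rewrite KfW_E /qf trmx_mul !mulmxA. Qed.

Lemma Pm_inj (c : 'cV[R]_N) : Pm *m c = 0 -> c = 0.
Proof.
move=> H; apply/matrixP => k l; rewrite (ord1 l) -Pmul_j H !mxE //.
Qed.

Lemma KfW_sym : (KfW U f j)^T = KfW U f j.
Proof. by rewrite KfW_E !trmx_mul trmxK K_sym mulmxA. Qed.

Lemma KfW_unit : KfW U f j \in unitmx.
Proof.
apply: PD_unit; first exact: KfW_sym.
move=> c nz; rewrite qf_Pm; case: hf => _; apply.
by apply/eqP => /Pm_inj; apply/eqP.
Qed.

Definition cW (x : 'cV[R]_n) := invmx (KfW U f j) *m (Pm^T *m x).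

Lemma interp_E x : interp U f j x = K *m (Pm *m cW x).
Proof.
rewrite /interp /=.
have -> : \col_k x (j k) 0 = Pm^T *m x.
  by apply/matrixP => k l; rewrite (ord1 l) trPmul_E mxE.
apply/matrixP => i l; rewrite (ord1 l) summxE mulmxA mxE.
apply: eq_bigr => k _; rewrite mxE mulmxP_E mulrC [K i (j k)]mxE //.
Qed.

Lemma PT_e x : Pm^T *m (x - interp U f j x) = 0.
Proof.
rewrite mulmxBr interp_E /cW !mulmxA -KfW_E mulmxV ?mul1mx ?subrr //.
exact: KfW_unit.
Qed.

Lemma Knorm_le x : qf Ki (x - interp U f j x) (x - interp U f j x) <= qf Ki x x.
Proof.
set e := x - _; set h := K *m (Pm *m cW x).
have xe : x = e + h by rewrite /e interp_E subrK.
have eh : qf Ki e h = 0.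
  rewrite /qf /h !mulmxA -[e^T *m Ki *m K]mulmxA KiK mulmx1.
  have -> : e^T *m Pm = (Pm^T *m e)^T by rewrite trmx_mul trmxK.
  by rewrite PT_e trmx0 !mul0mx mxE.
have hh : 0 <= qf Ki h h.
  have := K_pos (Pm *m cW x); rewrite /qf /h [(K *m _)^T]trmx_mul K_sym.
  by rewrite !mulmxA -[_ *m K *m Ki]mulmxA KKi mulmx1.
clearbody e h; rewrite [in X in _ <= X]xe qfDl !qfDr eh (qf_sym h e Ki_sym) eh !addr0 add0r.
by rewrite lerDl.
Qed.

Lemma err_cs x v (a : 'cV[R]_N) :
  (x - interp U f j x) v 0 ^+ 2 <=
  qf K (ebasis R v - Pm *m a) (ebasis R v - Pm *m a) *
  qf Ki (x - interp U f j x) (x - interp U f j x).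
Proof.
set e := x - interp U f j x; set g := ebasis R v - Pm *m a.
have ev : e v 0 = qf Ki (K *m g) e.
  rewrite /qf trmx_mul K_sym -[g^T *m K *m Ki]mulmxA KKi mulmx1.
  rewrite /g [(_ - _)^T]linearB /= mulmxBl trmx_mul -mulmxA PT_e mulmx0 subr0.
  rewrite [RHS]mxE (bigD1 v) //= !mxE eqxx mul1r big1 ?addr0 // => i ne.
  by rewrite !mxE (negbTE ne) mul0r.
have gg : qf Ki (K *m g) (K *m g) = qf K g g.
  rewrite /qf trmx_mul K_sym -[g^T *m K *m Ki]mulmxA KKi mulmx1 mulmxA //.
rewrite ev -gg; apply: qf_cs; [exact: Ki_sym|exact: Ki_pos].
Qed.

Lemma qf_K_diag g : qf K g g = \sum_k (U^T *m g) k 0 ^+ 2 * fh k 0.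
Proof.
rewrite K_decomp /qf.
have -> : g^T *m (U *m diag_mx fh^T *m U^T) *m g =
  (U^T *m g)^T *m diag_mx fh^T *m (U^T *m g).
  by rewrite [(U^T *m g)^T]trmx_mul trmxK !mulmxA.
rewrite mul_mx_diag mxE; apply: eq_bigr => k _; rewrite !mxE.
by rewrite expr2 mulrAC.
Qed.

Lemma fh_ge0 k : 0 <= fh k 0.
Proof.
have := K_pos (U *m ebasis R k); rewrite qf_K_diag mulmxA hUorth mul1mx.
rewrite (bigD1 k) //= big1 ?addr0 => [|l ne]; last by rewrite mxE (negbTE ne) expr0n /= mul0r.
by rewrite mxE eqxx expr1n mul1r.
Qed.

Lemma sum_img (F : 'I_n -> R) :
  \sum_k F (j k) = \sum_(i in j @: (finset.setT : {set 'I_N})) F i.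
Proof.
rewrite big_imset /=; last by move=> a b _ _; apply: hj.
by apply: eq_bigl => i; rewrite finset.in_setT.
Qed.

Lemma sum_sub (F : 'I_n -> R) : (forall i, 0 <= F i) ->
  \sum_k F (j k) <= \sum_i F i.
Proof.
move=> F0; rewrite sum_img [X in _ <= X](bigID (mem (j @: (finset.setT : {set 'I_N})))) /=.
by rewrite lerDl sumr_ge0.
Qed.

Lemma sum_SW (w : 'cV[R]_n) :
  \sum_i (SW j w) i 0 ^+ 2 = \sum_k w (j k) 0 ^+ 2.
Proof.
rewrite (sum_img (fun i => w i 0 ^+ 2)) [RHS]big_mkcond /=; apply: eq_bigr => i _; rewrite mxE.
have -> : [exists k, j k == i] = (i \in j @: (finset.setT : {set 'I_N})).
  apply/existsP/imsetP => [[k /eqP <-]|[k _ ->]]; by exists k.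
by case: ifP => _ //; rewrite expr0n.
Qed.

Definition supp (z : 'cV[R]_n) := forall k : 'I_n, (M <= k)%N -> z k 0 = 0.

Lemma sum_col (z : 'cV[R]_n) : supp z ->
  \sum_(k < n | (k < M)%N) z k 0 *: col k U = U *m z.
Proof.
move=> sz; apply/matrixP => i l; rewrite (ord1 l) summxE mxE big_mkcond /=.
apply: eq_bigr => k _; rewrite !mxE; case: ltnP => h; first by rewrite mulrC.
by rewrite sz // mulr0.
Qed.

Lemma inBM_U (z : 'cV[R]_n) : supp z -> inBM U M (U *m z).
Proof. by move=> sz; exists (fun k => z k 0); rewrite sum_col. Qed.

Lemma inBM_ex (y : 'cV[R]_n) : inBM U M y -> exists2 z, supp z & y = U *m z.
Proof.
case=> a ->; have sz : supp (\col_k (if (k < M)%N then a k else 0)).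
  by move=> k h; rewrite mxE ltnNge h.
exists (\col_k (if (k < M)%N then a k else 0)) => //.
rewrite -sum_col //; apply: eq_bigr => k h; rewrite mxE h //.
Qed.

Lemma coef_U (z : 'cV[R]_n) (k : 'I_n) : ((col k U)^T *m (U *m z)) 0 0 = z k 0.
Proof.
transitivity ((U^T *m (U *m z)) k 0).
  by rewrite !mxE; apply: eq_bigr => i _; rewrite !mxE.
by rewrite mulmxA hUorth mul1mx.
Qed.

Lemma BM_U (z : 'cV[R]_n) : supp z -> BM U M (U *m z) = U *m z.
Proof.
move=> sz; rewrite /BM -{2}(sum_col sz); apply: eq_bigr => k _.
by rewrite coef_U.
Qed.

Lemma BM_id (y : 'cV[R]_n) : inBM U M y -> BM U M y = y.
Proof. by case/inBM_ex => z sz ->; apply: BM_U. Qed.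

Lemma sumsq_E m (w : 'cV[R]_m) : \sum_i w i 0 ^+ 2 = (w^T *m w) 0 0.
Proof. by rewrite mxE; apply: eq_bigr => i _; rewrite mxE expr2. Qed.

Lemma enorm_U (z : 'cV[R]_n) : enorm (U *m z) = enorm z.
Proof.
rewrite /enorm !sumsq_E trmx_mul -mulmxA [U^T *m _]mulmxA hUorth mul1mx //.
Qed.

Lemma enormZ m (c : R) (w : 'cV[R]_m) : enorm (c *: w) = `|c| * enorm w.
Proof.
rewrite /enorm -sqrtr_sqr -sqrtrM ?sqr_ge0 // mulr_sumr.
by congr Num.sqrt; apply: eq_bigr => i _; rewrite mxE exprMn.
Qed.

Lemma SWZ (c : R) (w : 'cV[R]_n) : SW j (c *: w) = c *: SW j w.
Proof.
by apply/matrixP => i l; rewrite !mxE; case: ifP => _; rewrite ?mulr0.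
Qed.

Lemma inBMZ (c : R) (y : 'cV[R]_n) : inBM U M y -> inBM U M (c *: y).
Proof.
case=> a ->; exists (fun k => c * a k); rewrite scaler_sumr.
by apply: eq_bigr => k _; rewrite scalerA.
Qed.

Lemma inBM0 : inBM U M 0.
Proof. by exists (fun _ => 0); rewrite big1 // => k _; rewrite scale0r. Qed.

Lemma BM0 : BM U M 0 = 0.
Proof. by rewrite /BM big1 // => k _; rewrite mulmx0 mxE scale0r. Qed.

Lemma SW0 : SW j (0 : 'cV[R]_n) = 0.
Proof. by apply/matrixP => i l; rewrite !mxE; case: ifP. Qed.

Lemma enorm_ge0 m (w : 'cV[R]_m) : 0 <= enorm w.
Proof. exact: sqrtr_ge0. Qed.

Definition Phi : 'M[R]_(N, n) :=
  \matrix_(i, k) (if (k < M)%N then U (j i) k else 0).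
Definition dc : 'rV[R]_n := \row_k (if (k < M)%N then 0 else 1).
Definition Gm := Phi^T *m Phi + diag_mx dc.

Lemma Uz_j (z : 'cV[R]_n) i : supp z -> (U *m z) (j i) 0 = (Phi *m z) i 0.
Proof.
move=> sz; rewrite !mxE; apply: eq_bigr => k _; rewrite mxE.
by case: ltnP => h //; rewrite sz // !mulr0.
Qed.

Lemma dc_ge0 k : 0 <= dc 0 k.
Proof. by rewrite mxE; case: ifP. Qed.

Lemma qf_G (z : 'cV[R]_n) : qf Gm z z =
  \sum_i (Phi *m z) i 0 ^+ 2 + \sum_k dc 0 k * z k 0 ^+ 2.
Proof.
rewrite /qf /Gm mulmxDr mulmxDl mxE; congr (_ + _).
  by rewrite sumsq_E trmx_mul !mulmxA.
by rewrite mul_mx_diag mxE; apply: eq_bigr => k _; rewrite !mxE expr2 mulrAC mulrC.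
Qed.

Lemma G_sym : Gm^T = Gm.
Proof. by rewrite /Gm linearD /= trmx_mul trmxK tr_diag_mx. Qed.

Lemma G_PD (z : 'cV[R]_n) : z != 0 -> 0 < qf Gm z z.
Proof.
move=> nz; have s1 : 0 <= \sum_i (Phi *m z) i 0 ^+ 2 by apply: sumr_ge0 => i _; apply: sqr_ge0.
have s2 : 0 <= \sum_k dc 0 k * z k 0 ^+ 2.
  by apply: sumr_ge0 => k _; apply: mulr_ge0; [apply: dc_ge0|apply: sqr_ge0].
rewrite qf_G lt_def addr_ge0 // andbT; apply/negP; rewrite paddr_eq0 //.
case/andP => /eqP e1 /eqP e2; move/negP: nz; apply; apply/eqP.
have nn2 : forall k : 'I_n, true -> 0 <= dc 0 k * z k 0 ^+ 2.
  by move=> k' _; apply: mulr_ge0; [apply: dc_ge0|apply: sqr_ge0].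
have nn1 : forall i : 'I_N, true -> 0 <= (Phi *m z) i 0 ^+ 2.
  by move=> k' _; apply: sqr_ge0.
have sz : supp z.
  move=> k h; have := psumr_eq0P nn2 e2 (i := k) isT.
  by rewrite !mxE ltnNge h mul1r => /eqP; rewrite sqrf_eq0 => /eqP.
have Phz i : (Phi *m z) i 0 = 0.
  by have := psumr_eq0P nn1 e1 (i := i) isT; move/eqP; rewrite sqrf_eq0 => /eqP.
have y0 : U *m z = 0.
  apply: hW; [exact: inBM_U|exact: inBM0|].
  rewrite BM0 SW0 BM_U //; apply/matrixP => i l; rewrite !mxE.
  case: ifP => // /existsP [k /eqP <-].
  by have := Uz_j k sz; rewrite Phz mxE.
by rewrite -[z]mul1mx -hUorth -mulmxA y0 mulmx0.
Qed.

Lemma G_unit : Gm \in unitmx.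
Proof. exact: PD_unit G_sym G_PD. Qed.

Definition phiv (v : 'I_n) : 'cV[R]_n := \col_k (if (k < M)%N then U v k else 0).
Definition beta v := invmx Gm *m phiv v.
Definition av v := Phi *m beta v.

Lemma G_beta v : Gm *m beta v = phiv v.
Proof. by rewrite /beta mulmxA mulmxV ?mul1mx //; apply: G_unit. Qed.

Lemma PhiT_entry (w : 'cV[R]_N) k :
  (Phi^T *m w) k 0 = if (k < M)%N then \sum_i U (j i) k * w i 0 else 0.
Proof.
rewrite mxE; case: ifP => h.
  by apply: eq_bigr => i _; rewrite !mxE h.
by rewrite big1 // => i _; rewrite !mxE h mul0r.
Qed.

Lemma G_entry (z : 'cV[R]_n) k :
  (Gm *m z) k 0 = (Phi^T *m (Phi *m z)) k 0 + dc 0 k * z k 0.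
Proof. by rewrite /Gm mulmxDl mxE mulmxA mul_diag_mx !mxE. Qed.

Lemma beta_supp v : supp (beta v).
Proof.
move=> k h; have := congr1 (fun A : 'M[R]_(n,1) => A k 0) (G_beta v).
by rewrite /= G_entry PhiT_entry ltnNge h /= add0r !mxE ltnNge h /= mul1r.
Qed.

Lemma ghat0 v (k : 'I_n) : (k < M)%N ->
  U v k - \sum_i U (j i) k * av v i 0 = 0.
Proof.
move=> h; have := congr1 (fun A : 'M[R]_(n,1) => A k 0) (G_beta v).
rewrite /= G_entry PhiT_entry h !mxE h mul0r addr0 => <-.
by rewrite subrr.
Qed.

Lemma av_norm v : \sum_i av v i 0 ^+ 2 = (U *m beta v) v 0.
Proof.
rewrite sumsq_E /av trmx_mul -mulmxA mxE [RHS]mxE; apply: eq_bigr => k _.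
have E := G_entry (beta v) k; rewrite G_beta in E.
have -> : (Phi^T *m (Phi *m beta v)) k 0 = phiv v k 0 - dc 0 k * beta v k 0.
  by rewrite E addrK.
rewrite !mxE; case: ltnP => h; first by rewrite mul0r subr0 mulrC.
by have := (@beta_supp v k h); rewrite !mxE => ->; rewrite !mul0r mulr0.
Qed.

Lemma ghat_E v (a : 'cV[R]_N) k :
  (U^T *m (ebasis R v - Pm *m a)) k 0 = U v k - \sum_i U (j i) k * a i 0.
Proof.
rewrite mulmxBr mxE [X in _ + X]mxE; congr (_ - _).
  by rewrite mxE gft_ebasis.
rewrite mulmxA mxE; apply: eq_bigr => i _; rewrite mulmxP_E mxE //.
Qed.

Definition Eset := [set enorm y | y in
  [set y : 'cV[R]_n | inBM U M y /\ enorm (SW j (BM U M y)) <= 1]]%classic.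
Local Notation L := (inv_opnorm U M j).
Lemma L_def : L = sup Eset. Proof. by []. Qed.

Definition Hm := invmx Gm *m Phi^T.

Lemma enorm0 m : enorm (0 : 'cV[R]_m) = 0.
Proof. by rewrite /enorm big1 ?sqrtr0 // => i _; rewrite mxE expr0n. Qed.

Lemma enorm_le1 m (w : 'cV[R]_m) : enorm w <= 1 -> \sum_i w i 0 ^+ 2 <= 1.
Proof.
move=> h; have : enorm w <= Num.sqrt 1 by rewrite sqrtr1.
by rewrite /enorm ler_sqrt // ler01.
Qed.

Lemma in_set_bound y : inBM U M y -> enorm (SW j (BM U M y)) <= 1 ->
  enorm y <= Num.sqrt (\sum_k (\sum_i `|Hm k i|) ^+ 2).
Proof.
case/inBM_ex => z sz ->; rewrite BM_U // enorm_U => /enorm_le1.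
rewrite sum_SW; under eq_bigr do rewrite Uz_j //.
set w := Phi *m z => ws.
have wi i : `|w i 0| <= 1.
  apply: sq_le_abs; first exact: ler01.
  by rewrite expr1n; apply: le_trans ws; apply: (sq_le_sum (fun i => w i 0)).
have Dz : diag_mx dc *m z = 0.
  apply/matrixP => k l; rewrite mul_diag_mx !mxE (ord1 l).
  by case: ltnP => h; [rewrite mul0r | rewrite sz // mulr0].
have zE : z = Hm *m w.
  have : Gm *m z = Phi^T *m w by rewrite /Gm mulmxDl Dz addr0 mulmxA.
  by move/(congr1 (mulmx (invmx Gm))); rewrite mulKmx ?G_unit // mulmxA.
rewrite /enorm ler_sqrt; last by apply: sumr_ge0 => k _; apply: sqr_ge0.
apply: ler_sum => k _; apply: abs_le_sq; rewrite zE mxE.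
apply: le_trans (ler_norm_sum _ _ _) _; apply: ler_sum => i _.
rewrite normrM -[X in _ <= X]mulr1; apply: ler_wpM2l => //; exact: normr_ge0.
Qed.

Lemma Eset0 : Eset 0.
Proof.
exists 0; last exact: enorm0.
by split; [exact: inBM0 | rewrite BM0 SW0 enorm0 ler01].
Qed.

Lemma E_has_sup : has_sup Eset.
Proof.
split; first by exists 0; exact: Eset0.
exists (Num.sqrt (\sum_k (\sum_i `|Hm k i|) ^+ 2)) => r [y [iy hy] <-].
exact: in_set_bound.
Qed.

Lemma L_ge0 : 0 <= L.
Proof. by rewrite L_def; apply: sup_upper_bound; [exact: E_has_sup|exact: Eset0]. Qed.

Lemma enorm_eq0 m (w : 'cV[R]_m) : enorm w = 0 -> w = 0.
Proof.
move/eqP; rewrite sqrtr_eq0 => h.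
have h0 : \sum_i w i 0 ^+ 2 = 0.
  by apply/eqP; rewrite eq_le h sumr_ge0 // => i _; apply: sqr_ge0.
apply/matrixP => i l; rewrite (ord1 l) mxE.
have := psumr_eq0P (F := fun i => w i 0 ^+ 2) (P := xpredT) _ h0 (i := i) isT.
by move=> /(_ (fun i _ => sqr_ge0 _)) /eqP; rewrite sqrf_eq0 => /eqP.
Qed.

Lemma L_bound y : inBM U M y -> enorm y <= L * enorm (SW j y).
Proof.
move=> iy; have [t0|tp] := eqVneq (enorm (SW j y)) 0.
  have y0 : y = 0.
    apply: hW => //; first exact: inBM0.
    by rewrite BM0 SW0 BM_id // (enorm_eq0 t0).
  by rewrite y0 SW0 !enorm0 mulr0.
have tp' : 0 < enorm (SW j y) by rewrite lt_def tp enorm_ge0.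
set t := enorm (SW j y) in tp tp' *.
have : Eset (enorm (t^-1 *: y)).
  exists (t^-1 *: y) => //; split; first exact: inBMZ.
  rewrite BM_id; last exact: inBMZ.
  have -> : SW j (t^-1 *: y) = t^-1 *: SW j y.
    by apply/matrixP => i l; rewrite !mxE; case: ifP => _; rewrite ?mulr0.
  rewrite enormZ ger0_norm ?invr_ge0 ?enorm_ge0 //.
  by rewrite mulVf.
move/(sup_upper_bound E_has_sup); rewrite -L_def enormZ ger0_norm ?invr_ge0 ?enorm_ge0 //.
by rewrite ler_pdivrMl // mulrC.
Qed.

Lemma Ucol k : \sum_i U i k ^+ 2 = 1.
Proof.
transitivity ((U^T *m U) k k); last by rewrite hUorth mxE eqxx.
by rewrite mxE; apply: eq_bigr => i _; rewrite mxE expr2.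
Qed.

Lemma abs_yv (y : 'cV[R]_n) v : `|y v 0| <= enorm y.
Proof.
apply: sq_le_abs; first exact: enorm_ge0.
rewrite sqr_sqrtr; last by apply: sumr_ge0 => i _; apply: sqr_ge0.
exact: (sq_le_sum (fun i => y i 0)).
Qed.

Lemma na_le v : Num.sqrt (\sum_i av v i 0 ^+ 2) <= L.
Proof.
set y := U *m beta v.
have iy : inBM U M y := inBM_U (@beta_supp v).
have hS : enorm (SW j y) = Num.sqrt (\sum_i av v i 0 ^+ 2).
  rewrite /enorm sum_SW; congr Num.sqrt; apply: eq_bigr => i _.
  by rewrite Uz_j //; apply: beta_supp.
set na := Num.sqrt _ in hS *.
have na0 : 0 <= na := sqrtr_ge0 _.
have key : na * na <= L * na.
  have -> : na * na = y v 0.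
    rewrite -expr2 sqr_sqrtr ?av_norm //; rewrite -av_norm; apply: sumr_ge0 => i _; apply: sqr_ge0.
  apply: le_trans (ler_norm _) _; apply: le_trans (abs_yv y v) _.
  by rewrite -hS; apply: L_bound.
have [->|nz] := eqVneq na 0; first exact: L_ge0.
have nap : 0 < na by rewrite lt_def nz na0.
by rewrite -(ler_pM2r nap).
Qed.

Lemma err_v x v : `|(x - interp U f j x) v 0| <=
  (1 + L) * Num.sqrt (\sum_(k < n | (M <= k)%N) fh k 0) * Kfnorm U f x.
Proof.
set e := x - interp U f j x; set a := av v.
set na := Num.sqrt (\sum_i a i 0 ^+ 2).
set S := \sum_(k < n | (M <= k)%N) fh k 0.
have S0 : 0 <= S by apply: sumr_ge0 => k _; apply: fh_ge0.
have na0 : 0 <= na := sqrtr_ge0 _.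
have naL : na <= L := na_le v.
have gk k : `|(U^T *m (ebasis R v - Pm *m a)) k 0| <= 1 + na.
  rewrite ghat_E; apply: le_trans (ler_normB _ _) _; apply: lerD.
    apply: sq_le_abs; first exact: ler01.
    by rewrite expr1n -(Ucol k); apply: (sq_le_sum (fun i => U i k)).
  apply: sq_le_abs => //; rewrite sqr_sqrtr; last by apply: sumr_ge0 => i _; apply: sqr_ge0.
  apply: le_trans (sum_cs (fun i => U (j i) k) (fun i => a i 0)) _.
  rewrite -[X in _ <= X]mul1r; apply: ler_wpM2r.
    by apply: sumr_ge0 => i _; apply: sqr_ge0.
  by rewrite -(Ucol k); apply: (sum_sub (F := fun i => U i k ^+ 2)) => i; apply: sqr_ge0.
set g := ebasis R v - Pm *m a.
have hq : qf K g g <= (1 + na) ^+ 2 * S.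
  rewrite qf_K_diag (bigID (fun k : 'I_n => (k < M)%N)) /= big1 ?add0r => [|k h]; last first.
    by rewrite /g ghat_E ghat0 // expr0n mul0r.
  rewrite [X in X <= _](eq_bigl (fun k : 'I_n => (M <= k)%N)); [|by move=> k /=; rewrite ltnNge negbK].
  rewrite /S mulr_sumr; apply: ler_sum => k _; apply: ler_wpM2r; first exact: fh_ge0.
  exact: abs_le_sq.
have cs := err_cs x v a.
have kn := Knorm_le x.
have KnE : Kfnorm U f x = Num.sqrt (qf Ki x x) by [].
have Kn0 : 0 <= Kfnorm U f x := sqrtr_ge0 _.
have : e v 0 ^+ 2 <= ((1 + na) * Num.sqrt S * Kfnorm U f x) ^+ 2.
  rewrite KnE !exprMn !sqr_sqrtr //; last exact: Ki_pos.
  apply: le_trans cs _; apply: ler_pM => //; [exact: K_pos|exact: Ki_pos].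
move/sq_le_abs => H; apply: le_trans (H _) _.
  by apply: mulr_ge0 => //; apply: mulr_ge0; [apply: addr_ge0 => //; apply: ler01|apply: sqrtr_ge0].
apply: ler_wpM2r => //; apply: ler_wpM2r; first exact: sqrtr_ge0.
by rewrite lerD2l.
Qed.

End Main.

Lemma powE (R : realType) (a p : R) : 0 < a -> a `^ p = expR (p * ln a).
Proof. by move=> a0; rewrite /powR gt_eqF. Qed.

Lemma pw (R : realType) (x s : R) : 1 <= x -> 1 < s ->
  (s - 1) * (x + 1) `^ (- s) <= x `^ (- (s - 1)) - (x + 1) `^ (- (s - 1)).
Proof.
move=> x1 s1; have x0 : 0 < x by apply: lt_le_trans x1; apply: ltr01.
have y0 : 0 < x + 1 by apply: addr_gt0 => //; apply: ltr01.
rewrite !powE //; set la := ln x; set lb := ln (x + 1).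
have hl : 1 + (la - lb) <= x / (x + 1).
  by have := expR_ge1Dx (la - lb); rewrite expRB !lnK // posrE.
have h2 : 1 / (x + 1) <= lb - la.
  have : x / (x + 1) = 1 - 1 / (x + 1) by field; rewrite gt_eqF.
  move=> e; rewrite e in hl; lra.
set A := expR (- (s - 1) * lb).
have A0 : 0 < A := expR_gt0 _.
have ey : expR (- s * lb) = A / (x + 1).
  rewrite /A -[x + 1 in RHS]lnK ?posrE // -expRN -expRD; congr expR; rewrite /lb; ring.
have ex : expR (- (s - 1) * la) = A * expR ((s - 1) * (lb - la)).
  by rewrite /A -expRD; congr expR; ring.
rewrite ey ex.
have E1 := expR_ge1Dx ((s - 1) * (lb - la)).
set E := expR _ in E1 *.
have s0 : 0 <= s - 1 by rewrite subr_ge0 ltW.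
apply: le_trans (_ : A * ((s - 1) * (lb - la)) <= _).
  have -> : (s - 1) * (A / (x + 1)) = A * ((s - 1) * (1 / (x + 1))).
    by field; rewrite gt_eqF.
  apply: ler_wpM2l; first exact: ltW.
  by apply: ler_wpM2l.
have : A * (1 + (s - 1) * (lb - la)) <= A * E by apply: ler_wpM2l => //; exact: ltW.
lra.
Qed.

Lemma tail_sum (R : realType) (h T : nat -> R) m n' : (m <= n')%N ->
  (forall k, (m <= k)%N -> h k <= T k - T k.+1) -> 0 <= T n' ->
  \sum_(m <= k < n') h k <= T m.
Proof.
move=> mn H T0.
apply: le_trans (_ : \sum_(m <= k < n') (T k - T k.+1) <= _).
  by apply: ler_sum_nat => k /andP [hk _]; apply: H.
have := telescope_sumr (fun k => - T k) mn.
under eq_bigr do rewrite opprK addrC.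
move=> ->; lra.
Qed.

Lemma tail_pow (R : realType) n M (F : 'I_n -> R) (C1 s : R) :
  (0 < M)%N -> (M <= n)%N -> 0 < C1 -> 1 < s ->
  (forall k : 'I_n, F k <= C1 * (k.+1)%:R `^ (- s)) ->
  \sum_(k < n | (M <= k)%N) F k <= C1 / (s - 1) * M%:R `^ (- (s - 1)).
Proof.
move=> M0 Mn C0 s1 hF.
apply: le_trans (_ : \sum_(k < n | (M <= k)%N) C1 * (k.+1)%:R `^ (- s) <= _).
  by apply: ler_sum => k _; apply: hF.
have -> : \sum_(k < n | (M <= k)%N) C1 * (k.+1)%:R `^ (- s) =
  \sum_(M <= k < n) C1 * (k.+1)%:R `^ (- s) by rewrite big_geq_mkord.
have s0 : 0 < s - 1 by rewrite subr_gt0.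
apply: (tail_sum (T := fun k => C1 / (s - 1) * k%:R `^ (- (s - 1)))) => //.
  move=> k hk /=; rewrite -mulrBr.
  have k1 : 1 <= k%:R :> R by rewrite ler1n; apply: leq_trans hk.
  have := pw k1 s1; rewrite natr1 => hp.
  have -> : C1 * (k.+1)%:R `^ (- s) = C1 / (s - 1) * ((s - 1) * (k.+1)%:R `^ (- s)).
    by field; rewrite gt_eqF.
  apply: ler_wpM2l => //; apply: divr_ge0; exact: ltW.
by apply: mulr_ge0; [apply: divr_ge0; exact: ltW | apply: powR_ge0].
Qed.

Lemma tail_exp (R : realType) n M (F : 'I_n -> R) (C2 t : R) :
  (M <= n)%N -> 0 < C2 -> 0 < t ->
  (forall k : 'I_n, F k <= C2 * expR (- (t * (k.+1)%:R))) ->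
  \sum_(k < n | (M <= k)%N) F k <=
    C2 / (1 - expR (- t)) * expR (- (t * (M.+1)%:R)).
Proof.
move=> Mn C0 t0 hF.
apply: le_trans (_ : \sum_(k < n | (M <= k)%N) C2 * expR (- (t * (k.+1)%:R)) <= _).
  by apply: ler_sum => k _; apply: hF.
have -> : \sum_(k < n | (M <= k)%N) C2 * expR (- (t * (k.+1)%:R)) =
  \sum_(M <= k < n) C2 * expR (- (t * (k.+1)%:R)) by rewrite big_geq_mkord.
have q1 : expR (- t) < 1 by rewrite expR_lt1 oppr_lt0.
have q0 : 0 < 1 - expR (- t) by rewrite subr_gt0.
apply: (tail_sum (T := fun k => C2 / (1 - expR (- t)) * expR (- (t * (k.+1)%:R)))) => //.
  move=> k hk /=; rewrite -[(k.+2)%:R]natr1.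
  have -> : expR (- (t * ((k.+1)%:R + 1))) = expR (- (t * (k.+1)%:R)) * expR (- t).
    by rewrite -expRD; congr expR; ring.
  rewrite le_eqVlt; apply/orP; left; apply/eqP.
  by field; rewrite gt_eqF.
by apply: mulr_ge0; [apply: divr_ge0; [exact: ltW|exact: ltW] | apply: ltW; apply: expR_gt0].
Qed.

Theorem corollary2 (R : realType) (n : nat)
  (A : 'M[R]_n) (U : 'M[R]_n) (lam : 'rV[R]_n)
  (hAsym : A^T = A) (hAnn : forall i k, 0 <= A i k)
  (hdeg : forall i, 0 < degree A i)
  (hUorth : U^T *m U = 1%:M)
  (hEig : normLap A = U *m diag_mx lam *m U^T)
  (f : 'cV[R]_n) (hf : pos_def_fun U f)
  (N : nat) (j : 'I_N -> 'I_n) (hj : injective j)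
  (M : nat) (hM0 : (0 < M)%N) (hMn : (M <= n)%N)
  (hW : norming U M j)
  (x : 'cV[R]_n) :
  (forall C1 s : R, 0 < C1 -> 1 < s ->
     (forall k : 'I_n, gft U f k 0 <= C1 * (k.+1)%:R `^ (- s)) ->
     maxabs (x - interp U f j x) <=
       Num.sqrt (C1 / (s - 1)) * (1 + inv_opnorm U M j)
       * M%:R `^ (- ((s - 1) / 2)) * Kfnorm U f x) /\
  (forall C2 t : R, 0 < C2 -> 0 < t ->
     (forall k : 'I_n, gft U f k 0 <= C2 * expR (- (t * (k.+1)%:R))) ->
     maxabs (x - interp U f j x) <=
       Num.sqrt (C2 / (1 - expR (- t))) * (1 + inv_opnorm U M j)
       * expR (- (t / 2 * (M.+1)%:R)) * Kfnorm U f x).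
Proof.
have L0 : 0 <= inv_opnorm U M j by apply: L_ge0.
set L := inv_opnorm U M j.
set S := \sum_(k < n | (M <= k)%N) gft U f k 0.
have S0 : 0 <= S by apply: sumr_ge0 => k _; apply: (fh_ge0 hUorth hf).
have Kn0 : 0 <= Kfnorm U f x := sqrtr_ge0 _.
have gen : forall c p, 0 <= c -> 0 <= p -> S <= c * p ^+ 2 ->
    maxabs (x - interp U f j x) <= Num.sqrt c * (1 + L) * p * Kfnorm U f x.
  move=> c p c0 p0 hS.
  have L1 : 0 <= 1 + L by apply: addr_ge0 => //; apply: ler01.
  rewrite /maxabs; apply: bigmax_le.
    by apply: mulr_ge0 => //; apply: mulr_ge0 => //; apply: mulr_ge0 => //; apply: sqrtr_ge0.
  move=> v _; apply: le_trans (err_v hUorth hf hj hW x v) _.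
  have -> : Num.sqrt c * (1 + L) * p * Kfnorm U f x =
    (1 + L) * (Num.sqrt c * p) * Kfnorm U f x by ring.
  apply: ler_wpM2r => //; apply: ler_wpM2l => //.
  rewrite -(ger0_norm p0) -sqrtr_sqr -sqrtrM // ler_sqrt //.
  by apply: mulr_ge0 => //; apply: sqr_ge0.
have M0 : 0 < M%:R :> R by rewrite ltr0n.
split.
  move=> C1 s C0 s1 hF; apply: gen.
  - by apply: divr_ge0; [exact: ltW | rewrite subr_ge0 ltW].
  - exact: powR_ge0.
  apply: le_trans (tail_pow hM0 hMn C0 s1 hF) _.
  rewrite !powE // expr2 -expRD; apply: ler_wpM2l.
    by apply: divr_ge0; [exact: ltW | rewrite subr_ge0 ltW].
  by rewrite le_eqVlt; apply/orP; left; apply/eqP; congr expR; field.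
move=> C2 t C0 t0 hF; apply: gen.
- have q0 : 0 < 1 - expR (- t) by rewrite subr_gt0 expR_lt1 oppr_lt0.
  by apply: divr_ge0; exact: ltW.
- by apply: ltW; apply: expR_gt0.
apply: le_trans (tail_exp hMn C0 t0 hF) _.
rewrite expr2 -expRD.
by rewrite le_eqVlt; apply/orP; left; apply/eqP; congr (_ * expR _); field.
Qed.
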